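(* Let $d\in\mathbb{N}$, and for $a=(a_0,\dots,a_d)\in\mathbb{R}^{d+1}$ and $s\in\mathbb{R}$ let $g(a,s)=a_0+a_1s+\cdots+a_ds^d$. For $m,R>0$ set $K=\{a\in\mathbb{R}^{d+1}: |a_0|+\cdots+|a_d|\geq m\}$ and $I=[-R,R]$. Then there exists $\lambda=\lambda(d,m,R)>0$ such that for each $a\in K$, either there exists $p\in\{1,\dots,d\}$ with $\left|\frac{\partial^p g}{\partial s^p}(a,s)\right|\geq\lambda$ for all $s\in I$, or $|a_0|-\sup_{s\in I}|g(a,s)-a_0|\geq\lambda$. *)

(* Defs.v *)
From HB Require Import structures.
From mathcomp Require Import all_boot all_order all_algebra.
From mathcomp Require Import all_classical all_reals.
Set Implicit Arguments. Unset Strict Implicit. Unset Printing Implicit Defensive.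
Import Order.TTheory GRing.Theory Num.Theory.
Local Open Scope ring_scope.

Definition gpoly (R : realType) (d : nat) (a : 'I_d.+1 -> R) : {poly R} :=
  \poly_(i < d.+1) a (inord i).

Definition g (R : realType) (d : nat) (a : 'I_d.+1 -> R) (s : R) : R :=
  (gpoly a).[s].

Definition dg (R : realType) (d : nat) (p : nat) (a : 'I_d.+1 -> R) (s : R) : R :=
  ((gpoly a)^`(p)).[s].

(* Main.v *)
Require Import Defs.
From HB Require Import structures.
From mathcomp Require Import all_boot all_order all_algebra.
From mathcomp Require Import all_classical all_reals.
Import Order.TTheory GRing.Theory Num.Theory.
From mathcomp Require Import ring lra.
Local Open Scope ring_scope.
Local Open Scope classical_set_scope.

Lemma size_deriv_le {R : realType} (q : {poly R}) n :
  (size q <= n.+1)%N -> (size q^`() <= n)%N.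
Proof.
have [->|q0] := eqVneq q 0; first by rewrite deriv0 size_poly0.
move=> h; have h2 := lt_size_deriv q0.
by rewrite -ltnS (leq_trans h2 h).
Qed.

Lemma key (R : realType) (Rad : R) : 0 <= Rad -> forall n : nat,
  exists C : R, 0 <= C /\ forall (eps : R) (q : {poly R}), 0 <= eps ->
    (size q <= n)%N ->
    (forall k, (k < n)%N -> exists s, -Rad <= s <= Rad /\ `|q^`(k).[s]| <= eps) ->
    forall i, `|q`_i| <= C * eps.
Proof.
move=> R0; elim=> [|n [C [C0 IH]]].
  exists 0; split => // eps q e0; rewrite size_poly_leq0 => /eqP -> _ i.
  by rewrite coef0 normr0 mul0r.
pose S := \sum_(i < n) Rad ^+ i.+1.
have S0 : 0 <= S by apply: sumr_ge0 => i _; exact: exprn_ge0.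
exists (1 + C + C * S); split.
  by rewrite addr_ge0 ?mulr_ge0 ?addr_ge0.
move=> eps q e0 sq hk.
have hd : forall i, `|q`_i.+1| <= C * eps.
  move=> i.
  have hk' : forall k, (k < n)%N -> exists s, -Rad <= s <= Rad /\ `|q^`()^`(k).[s]| <= eps.
    move=> k kn; have [s [hs hs2]] := hk k.+1 kn.
    by exists s; rewrite -derivSn.
  have := IH eps q^`() e0 (size_deriv_le _ _ sq) hk' i; rewrite coef_deriv => H.
  apply: le_trans H; rewrite -mulr_natr normrM normr_nat ler_peMr //.
  by rewrite ler1n.
case=> [|i]; last first.
  apply: le_trans (hd i) _; apply: ler_wpM2r => //.
  have := mulr_ge0 C0 S0; lra.
have [s [hs hs2]] := hk 0%N isT; rewrite derivn0 in hs2.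
have hsn : `|s| <= Rad by rewrite ler_norml.
rewrite (@horner_coef_wide _ _ _ _ sq) big_ord_recl /= expr0 mulr1 in hs2.
set T := \sum_(i < n) _ in hs2.
have hT : `|T| <= C * eps * S.
  rewrite /S mulr_sumr; apply: le_trans (ler_norm_sum _ _ _) _.
  apply: ler_sum => i _; rewrite /bump add1n normrM normrX.
  apply: ler_pM => //; first exact: exprn_ge0.
  by apply: lerXn2r => //; rewrite nnegrE ?normr_ge0.
have : `|q`_0| <= eps + C * eps * S.
  have -> : q`_0 = (q`_0 + T) - T by rewrite addrK.
  by apply: le_trans (ler_normB _ _) _; apply: lerD.
move=> h; apply: le_trans h _.
rewrite !mulrDl mul1r -addrA lerD2l -[X in X <= _]add0r lerD //.
  by rewrite mulr_ge0.
by rewrite mulrAC.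
Qed.

Lemma aux_ring (R : realType) (l c s k : R) :
  l * (1 + k * c + c * s) = l + k * (c * l) + c * l * s.
Proof. ring. Qed.

Theorem lemma2 (R : realType) (d : nat) (m Rad : R) :
  0 < m -> 0 < Rad ->
  exists lam : R, 0 < lam /\
    forall a : 'I_d.+1 -> R,
      m <= \sum_(i < d.+1) `|a i| ->
      (exists p : nat, (1 <= p <= d)%N /\
         forall s : R, -Rad <= s <= Rad -> lam <= `|dg p a s|)
      \/
      lam <= `|a ord0| - sup [set `|g a s - a ord0| | s in [set s : R | -Rad <= s <= Rad]].
Proof.
move=> m0 R0.
have [C [C0 HC]] := @key _ _ (ltW R0) d.
pose S := \sum_(i < d) Rad ^+ i.+1.
have S0 : 0 <= S by apply: sumr_ge0 => i _; apply: exprn_ge0; exact: ltW.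
pose D := 1 + d%:R * C + C * S.
have D0 : 0 < D.
  have := mulr_ge0 C0 S0; have := mulr_ge0 (ler0n R d) C0; rewrite /D; lra.
pose lam := m / D.
have lam0 : 0 < lam by rewrite divr_gt0.
have lamE : lam + d%:R * (C * lam) + C * lam * S = m.
  have -> : lam + d%:R * (C * lam) + C * lam * S = lam * D by rewrite /D aux_ring.
  by rewrite /lam divfK // lt0r_neq0.
exists lam; split => // a ha.
case: (pselect (exists p : nat, (1 <= p <= d)%N /\
         forall s : R, -Rad <= s <= Rad -> lam <= `|dg p a s|)) => [h|hnp]; first by left.
right.
have hk : forall k, (k < d)%N -> exists s, -Rad <= s <= Rad /\ `|(gpoly a)^`()^`(k).[s]| <= lam.
  move=> k kd; apply: contrapT => hne; apply: hnp; exists k.+1; split; first by apply/andP; split.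
  move=> s hs; rewrite /dg derivSn leNgt; apply/negP => hlt; apply: hne.
  by exists s; split => //; exact: ltW.
have hc := HC lam (gpoly a)^`() (ltW lam0) (size_deriv_le _ _ (size_poly _ _)) hk.
have ha' : forall i, (i < d)%N -> `|a (inord i.+1)| <= C * lam.
  move=> i id; apply: le_trans (hc i); rewrite coef_deriv coef_poly ltnS id.
  rewrite -mulr_natr normrM normr_nat ler_peMr //; by rewrite ler1n.
have aE : forall i : 'I_d, a (lift ord0 i) = a (inord i.+1).
  by move=> i; congr a; apply: val_inj; rewrite /= inordK // ltnS ltn_ord.
have a0E : a (inord 0) = a ord0 by congr a; apply: val_inj; rewrite /= inordK.
have hsum : m <= `|a ord0| + d%:R * (C * lam).
  apply: le_trans ha _; rewrite big_ord_recl lerD2l.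
  apply: le_trans (_ : \sum_(i < d) C * lam <= _); last by rewrite sumr_const card_ord mulr_natl.
  by apply: ler_sum => i _; rewrite aE; apply: ha'.
have hsup : sup [set `|g a s - a ord0| | s in [set s : R | -Rad <= s <= Rad]] <= C * lam * S.
  apply: ge_sup.
    exists `|g a 0 - a ord0|; exists 0 => //=.
    by rewrite oppr_le0 ltW.
  move=> _ [s hs <-].
  have hsn : `|s| <= Rad by rewrite ler_norml.
  rewrite /g (@horner_coef_wide _ _ _ _ (size_poly _ _)) big_ord_recl /= expr0 mulr1.
  rewrite coef_poly /= a0E addrC addKr /S mulr_sumr.
  apply: le_trans (ler_norm_sum _ _ _) _.
  apply: ler_sum => i _; rewrite /bump add1n normrM normrX coef_poly ltnS ltn_ord.
  apply: ler_pM => //; first exact: exprn_ge0.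
    by apply: ha'.
  by apply: lerXn2r => //; rewrite nnegrE ?normr_ge0 ?ltW.
lra.
Qed.
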